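(* For a consistent and complete definite action theory $(I,D)$, there is an initial $\mathbf{S5}$-state $(M_0,s_0)$ of $(I,D)$ with $|M_0[S]|\le 2^{|\mathcal F|}$, unique up to equivalence, such that every initial $\mathbf{S5}$-state $(M,s)$ of $(I,D)$ is equivalent to $(M_0,s_0)$.
   Context: Agents $\mathcal{AG}=\{1,\dots,n\}$ (finite) and a finite set $\mathcal F$ of fluents. Belief formulae are built from propositional (fluent) formulae over $\mathcal F$ with $\mathbf B_i$, Boolean connectives and $\mathbf E_\alpha,\mathbf C_\alpha$; $\mathbf C=\mathbf C_{\mathcal{AG}}$. Kripke structure $M$: worlds $M[S]$, interpretations $M[\pi](u)\subseteq\mathcal F$, relations $M[i]$; state $(M,s)$; standard semantics ($\mathbf B_i\varphi$: $\varphi$ at all $M[i]$-successors; $\mathbf E_\alpha$: all $\mathbf B_i$, $i\in\alpha$; $\mathbf C_\alpha\varphi$: $\mathbf E^k_\alpha\varphi$ for all $k\ge 0$). $\mathbf{S5}$: every $M[i]$ an equivalence relation. Two states are equivalent if they satisfy the same belief formulae. Action theory $(I,D)$: $D$ a domain (action descriptions, irrelevant to initial states) and $I$ a set of statements ''initially $\varphi$''; $T_I=\{\varphi\mid$ ''initially $\varphi$'' $\in I\}$; consistent if $T_I$ is satisfiable and $D$ is consistent. Initial $\mathbf{S5}$-state: $\mathbf{S5}$-state satisfying all of $T_I$. Definite: every statement of $I$ is of the form initially $\varphi$, initially $\mathbf C\varphi$, initially $\mathbf C(\mathbf B_i\varphi)$, initially $\mathbf C(\mathbf B_i\varphi\vee\mathbf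 B_i\neg\varphi)$ or initially $\mathbf C(\neg\mathbf B_i\varphi\wedge\neg\mathbf B_i\neg\varphi)$ ($\varphi$ fluent formula, $i$ agent), and for every fluent formula $\varphi$ and agent $i$, $I$ contains a statement of one of the last three forms with this $i,\varphi$. A definite action theory is complete if the set of fluent literals $\ell$ appearing in the statements of $I$ of the forms initially $\varphi$, initially $\mathbf C\varphi$, initially $\mathbf C(\mathbf B_i\varphi)$ is a complete interpretation of $\mathcal F$ (contains exactly one of $f,\neg f$ for every $f\in\mathcal F$). *)

(* Defs.v *)
From mathcomp Require Import all_boot.
Set Implicit Arguments. Unset Strict Implicit. Unset Printing Implicit Defensive.

Section Syntax.
Variables (Ag F : finType).

Inductive fform : Type :=
  | FVar of F
  | FTrue | FFalse
  | FNot of fform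
  | FAnd of fform & fform
  | FOr of fform & fform.

Inductive bform : Type :=
  | BF of fform
  | BNot of bform
  | BAnd of bform & bform
  | BOr of bform & bform
  | BB of Ag & bform
  | BE of {set Ag} & bform
  | BC of {set Ag} & bform.

Fixpoint fsat (v : F -> bool) (p : fform) : bool :=
  match p with
  | FVar f => v f
  | FTrue => true
  | FFalse => false
  | FNot q => ~~ fsat v q
  | FAnd q r => fsat v q && fsat v r
  | FOr q r => fsat v q || fsat v r
  end.

(* A Kripke structure is given by a type of worlds W, an interpretation
   pi : W -> F -> bool (pi u f = true iff f \in M[pi](u)) and relations
   R i : W -> W -> Prop for each agent i. *)

Definition Eop (W : Type) (R : Ag -> W -> W -> Prop) (alpha : {set Ag})
  (P : W -> Prop) : W -> Prop :=
  fun w => forall i, i \in alpha -> forall v, R i w v -> P v.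

Fixpoint sat (W : Type) (pi : W -> F -> bool) (R : Ag -> W -> W -> Prop)
  (w : W) (b : bform) {struct b} : Prop :=
  match b with
  | BF p => fsat (pi w) p
  | BNot c => ~ sat pi R w c
  | BAnd c d => sat pi R w c /\ sat pi R w d
  | BOr c d => sat pi R w c \/ sat pi R w d
  | BB i c => forall v, R i w v -> sat pi R v c
  | BE alpha c => forall i, i \in alpha -> forall v, R i w v -> sat pi R v c
  | BC alpha c => forall k : nat,
      iter k (Eop R alpha) (fun v => sat pi R v c) w
  end.

Definition S5 (W : Type) (R : Ag -> W -> W -> Prop) : Prop :=
  forall i, (forall u, R i u u) /\ (forall u v, R i u v -> R i v u) /\
            (forall u v x, R i u v -> R i v x -> R i u x).

Definition equiv_states (W1 : Type) (pi1 : W1 -> F -> bool)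
  (R1 : Ag -> W1 -> W1 -> Prop) (s1 : W1)
  (W2 : Type) (pi2 : W2 -> F -> bool) (R2 : Ag -> W2 -> W2 -> Prop) (s2 : W2)
  : Prop :=
  forall b : bform, sat pi1 R1 s1 b <-> sat pi2 R2 s2 b.

(* The initial part I of an action theory: the set T_I of formulae phi
   such that "initially phi" is in I (possibly infinite). *)
Definition init_theory := bform -> Prop.

Definition initial_S5_state (T : init_theory) (W : Type)
  (pi : W -> F -> bool) (R : Ag -> W -> W -> Prop) (s : W) : Prop :=
  S5 R /\ forall b, T b -> sat pi R s b.

Definition consistent_init (T : init_theory) : Prop :=
  exists (W : Type) (pi : W -> F -> bool) (R : Ag -> W -> W -> Prop) (s : W),
    initial_S5_state T pi R s.

Definition CC := BC [set: Ag].

Definition form_C_Bi (i : Ag) (p : fform) : bform := CC (BB i (BF p)).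
Definition form_C_knows (i : Ag) (p : fform) : bform :=
  CC (BOr (BB i (BF p)) (BB i (BF (FNot p)))).
Definition form_C_ignorant (i : Ag) (p : fform) : bform :=
  CC (BAnd (BNot (BB i (BF p))) (BNot (BB i (BF (FNot p))))).

Definition definite (T : init_theory) : Prop :=
  (forall b, T b ->
     (exists p, b = BF p) \/ (exists p, b = CC (BF p)) \/
     (exists i p, b = form_C_Bi i p) \/ (exists i p, b = form_C_knows i p) \/
     (exists i p, b = form_C_ignorant i p)) /\
  (forall (p : fform) (i : Ag),
     T (form_C_Bi i p) \/ T (form_C_knows i p) \/ T (form_C_ignorant i p)).

Definition is_literal (p : fform) : Prop :=
  exists f, p = FVar f \/ p = FNot (FVar f).

Definition lits_of (T : init_theory) (l : fform) : Prop :=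
  is_literal l /\ (T (BF l) \/ T (CC (BF l)) \/ exists i, T (form_C_Bi i l)).

Definition complete_init (T : init_theory) : Prop :=
  definite T /\
  forall f : F, (lits_of T (FVar f) /\ ~ lits_of T (FNot (FVar f))) \/
                (~ lits_of T (FVar f) /\ lits_of T (FNot (FVar f))).

End Syntax.

(* Main.v *)
Require Import Defs.
From mathcomp Require Import all_boot.
From Stdlib Require Import Classical.
Set Implicit Arguments. Unset Strict Implicit.

Section Aux.
Variables (Ag F : finType).

Fixpoint reachn (W : Type) (R : Ag -> W -> W -> Prop) (s : W) (n : nat) (w : W) : Prop :=
  match n with
  | 0 => w = s
  | n.+1 => exists v i, reachn R s n v /\ R i v w
  end.

Definition reach (W : Type) (R : Ag -> W -> W -> Prop) (s w : W) := exists n, reachn R s n w.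

Lemma reach_step W (R : Ag -> W -> W -> Prop) s w i u :
  reach R s w -> R i w u -> reach R s u.
Proof. by move=> [n Hn] Hr; exists n.+1; exists w, i. Qed.

Lemma reach_refl W (R : Ag -> W -> W -> Prop) s : reach R s s.
Proof. by exists 0. Qed.

Lemma iter_reach W (R : Ag -> W -> W -> Prop) s n : forall w, reachn R s n w ->
  forall P, iter n (Eop R [set: Ag]) P s -> P w.
Proof.
elim: n => [|n IH] w; first by move=> /= -> P.
move=> [v [i [Hv Hr]]] P H.
rewrite iterSr in H.
have := IH v Hv _ H. by move=> /(_ i (in_setT i) w Hr).
Qed.

Lemma CC_reach W (pi : W -> F -> bool) R s w (b : bform Ag F) :
  sat pi R s (CC b) -> reach R s w -> sat pi R w b.
Proof. move=> H [n Hn]. exact: (iter_reach Hn (H n)). Qed.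

Definition chil (l : seq F) (y : F -> bool) : fform F :=
  foldr (fun f acc => FAnd (if y f then FVar f else FNot (FVar f)) acc) (@FTrue F) l.

Lemma fsat_chil v y l : fsat v (chil l y) = all (fun f => v f == y f) l.
Proof.
elim: l => //= f l ->; by case: (y f) => /=; case: (v f).
Qed.

Definition chi y := chil (enum F) y.

Lemma fsat_chi v y : fsat v (chi y) <-> v =1 y.
Proof.
rewrite /chi fsat_chil; split.
  by move/allP=> H f; apply/eqP; apply: H; rewrite mem_enum.
by move=> H; apply/allP=> f _; rewrite H.
Qed.

Lemma fsat_ext (v1 v2 : F -> bool) (p : fform F) : v1 =1 v2 -> fsat v1 p = fsat v2 p.
Proof. move=> H; elim: p => /=; [by []|by []|by []|by move=> q ->|by move=> q -> r ->|by move=> q -> r ->]. Qed.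

Section Bisim.
Variables (W1 W2 : Type) (pi1 : W1 -> F -> bool) (R1 : Ag -> W1 -> W1 -> Prop)
  (pi2 : W2 -> F -> bool) (R2 : Ag -> W2 -> W2 -> Prop) (Z : W1 -> W2 -> Prop).
Hypothesis Zval : forall x y, Z x y -> pi1 x =1 pi2 y.
Hypothesis Zforth : forall x y i x', Z x y -> R1 i x x' -> exists y', R2 i y y' /\ Z x' y'.
Hypothesis Zback : forall x y i y', Z x y -> R2 i y y' -> exists x', R1 i x x' /\ Z x' y'.

Lemma E_bisim alpha (P1 : W1 -> Prop) (P2 : W2 -> Prop) :
  (forall x y, Z x y -> (P1 x <-> P2 y)) ->
  forall x y, Z x y -> (Eop R1 alpha P1 x <-> Eop R2 alpha P2 y).
Proof.
move=> HP x y Z0; split.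
  move=> H i Hi y' Hr. have [x' [Hr' Z']] := Zback Z0 Hr.
  by apply/(HP _ _ Z'); apply: H Hr'.
move=> H i Hi x' Hr. have [y' [Hr' Z']] := Zforth Z0 Hr.
by apply/(HP _ _ Z'); apply: H Hr'.
Qed.

Lemma sat_bisim (b : bform Ag F) : forall x y, Z x y -> (sat pi1 R1 x b <-> sat pi2 R2 y b).
Proof.
elim: b => /=.
- by move=> p x y Z0; rewrite (fsat_ext p (Zval Z0)).
- by move=> c IH x y Z0; rewrite (IH x y Z0).
- by move=> c IHc d IHd x y Z0; rewrite (IHc x y Z0) (IHd x y Z0).
- by move=> c IHc d IHd x y Z0; rewrite (IHc x y Z0) (IHd x y Z0).
- move=> i c IH x y Z0; split.
    move=> H y' Hr. have [x' [Hr' Z']] := Zback Z0 Hr.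
    by apply/(IH _ _ Z'); apply: H Hr'.
  move=> H x' Hr. have [y' [Hr' Z']] := Zforth Z0 Hr.
  by apply/(IH _ _ Z'); apply: H Hr'.
- move=> alpha c IH x y Z0.
  exact: (@E_bisim alpha (fun v => sat pi1 R1 v c) (fun v => sat pi2 R2 v c) IH x y Z0).
- move=> alpha c IH x y Z0.
  suff K : forall k x y, Z x y -> (iter k (Eop R1 alpha) (fun v => sat pi1 R1 v c) x <->
                               iter k (Eop R2 alpha) (fun v => sat pi2 R2 v c) y).
    by split=> H k; apply/(K k x y Z0).
  elim=> [|k IHk] /=; first exact: IH.
  exact: E_bisim.
Qed.
End Bisim.

Lemma match_lem (T : init_theory Ag F) : definite T ->
 forall W1 (pi1 : W1 -> F -> bool) R1 s1 W2 (pi2: W2 -> F -> bool) R2 s2,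
 initial_S5_state T pi1 R1 s1 -> initial_S5_state T pi2 R2 s2 ->
 forall w1 w2 i u1, reach R1 s1 w1 -> reach R2 s2 w2 -> pi1 w1 =1 pi2 w2 -> R1 i w1 u1 ->
 exists u2, R2 i w2 u2 /\ pi2 u2 =1 pi1 u1.
Proof.
move=> [_ Hdef] W1 pi1 R1 s1 W2 pi2 R2 s2 [S1 H1] [S2 H2] w1 w2 i u1 r1 r2 E Hr.
have [Heq|Hne] := classic (pi1 u1 =1 pi1 w1).
  exists w2; split; first by case: (S2 i).
  by move=> f; rewrite (Heq f) (E f).
set p := FNot (chi (pi1 u1)).
have chiu : fsat (pi1 u1) (chi (pi1 u1)) by apply/fsat_chi.
case: (Hdef p i) => [HT|[HT|HT]].
- have := CC_reach (H1 _ HT) r1.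
  by move=> /= /(_ u1 Hr); rewrite chiu.
- have := CC_reach (H1 _ HT) r1 => /= [[]].
    by move=> /(_ u1 Hr); rewrite chiu.
  have [Rr _] := S1 i.
  move=> /(_ w1 (Rr w1)); rewrite negbK => /fsat_chi H.
  by exfalso; apply: Hne => f; rewrite H.
- have := CC_reach (H2 _ HT) r2 => /= [[Hn _]].
  have [v Hv] := not_all_ex_not _ _ Hn.
  have [Rv Hf] := imply_to_and _ _ Hv.
  exists v; split => //; apply/fsat_chi.
  by apply: negbNE; apply/negP.
Qed.
End Aux.

Lemma lits_sat (Ag F : finType) (T : init_theory Ag F) l W (pi : W -> F -> bool) R s :
  lits_of T l -> initial_S5_state T pi R s -> fsat (pi s) l.
Proof.
move=> [_ [H|[H|[i H]]]] [S H5].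
- exact: (H5 _ H).
- exact: (CC_reach (H5 _ H) (reach_refl R s)).
- have := CC_reach (H5 _ H) (reach_refl R s) => /=.
  by have [Rr _] := S i; move=> /(_ s (Rr s)).
Qed.

Theorem proposition15 (Ag F : finType) (T : init_theory Ag F) :
  consistent_init T -> definite T -> complete_init T ->
  exists (W0 : finType) (pi0 : W0 -> F -> bool) (R0 : Ag -> W0 -> W0 -> Prop)
         (s0 : W0),
    initial_S5_state T pi0 R0 s0 /\ #|W0| <= 2 ^ #|F| /\
    (forall (W : Type) (pi : W -> F -> bool) (R : Ag -> W -> W -> Prop) (s : W),
       initial_S5_state T pi R s -> equiv_states pi R s pi0 R0 s0).
Proof.
move=> [W [pi [R [s Hs]]]] Hdef [_ Hcomp].
pose R0 : Ag -> {ffun F -> bool} -> {ffun F -> bool} -> Prop := fun i x y => x = y \/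
  exists w, reach R s w /\ pi w =1 x /\ exists u, R i w u /\ pi u =1 y.
pose s0 : {ffun F -> bool} := [ffun f => pi s f].
pose pi0 := fun (x : {ffun F -> bool}) f => x f.
pose Z1 := fun w (x : {ffun F -> bool}) => reach R s w /\ pi w =1 x.
have Hs5 := Hs; case: Hs5 => [S HT].
have B1 : forall b w x, Z1 w x -> (sat pi R w b <-> sat pi0 R0 x b).
  move=> b; apply: sat_bisim.
  - by move=> w x [].
  - move=> w x i w' [rw Ew] Hr; exists [ffun f => pi w' f]; split.
      right; exists w; split=> //; split=> //; exists w'; split=> // f; by rewrite ffunE.
    by split; [apply: reach_step rw Hr | move=> f; rewrite ffunE].
  - move=> w x i y [rw Ew] [<-|[w2 [rw2 [Ew2 [u2 [Hr2 Eu2]]]]]].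
      by exists w; split=> //; case: (S i).
    have [u [Hu Eu]] := match_lem Hdef Hs Hs rw2 rw (fun f => etrans (Ew2 f) (esym (Ew f))) Hr2.
    exists u; split=> //; split; first exact: reach_step rw Hu.
    by move=> f; rewrite Eu Eu2.
have Z1s : Z1 s s0 by split; [apply: reach_refl | move=> f; rewrite ffunE].
exists {ffun F -> bool}, pi0, R0, s0; split; last split.
- split; last by move=> b Hb; apply/(B1 b s s0 Z1s); apply: HT.
  move=> i; split; [by left|split].
    move=> u v [->|[w [rw [Ew [u2 [Hr Eu]]]]]]; first by left.
    have [_ [Sy _]] := S i.
    right; exists u2; split; first exact: reach_step rw Hr.
    split=> //; exists w; split=> //; exact: Sy.
  move=> u v x [E1|[w [rw [Ew [u2 [Hr Eu]]]]]]; first by subst.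
  case=> [E2|[w2 [rw2 [Ew2 [u3 [Hr3 Eu3]]]]]].
    by subst; right; exists w; split=> //; split=> //; exists u2.
  have ru2 : reach R s u2 by apply: reach_step rw Hr.
  have [u4 [Hu4 Eu4]] := match_lem Hdef Hs Hs rw2 ru2 (fun f => etrans (Ew2 f) (esym (Eu f))) Hr3.
  have [_ [_ Tr]] := S i.
  right; exists w; split=> //; split=> //; exists u4; split; first exact: Tr Hr Hu4.
  by move=> f; rewrite Eu4 Eu3.
- by rewrite card_ffun card_bool.
move=> W' pi' R' s' Hs' b.
pose Z := fun a w => reach R' s' a /\ reach R s w /\ pi' a =1 pi w.
have Es : pi' s' =1 pi s.
  move=> f; case: (Hcomp f) => [[L _]|[_ L]].
    by have := lits_sat L Hs'; have := lits_sat L Hs => /= -> ->.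
  by have := lits_sat L Hs'; have := lits_sat L Hs => /= /negbTE -> /negbTE ->.
rewrite -(B1 b s s0 Z1s).
apply: (@sat_bisim _ _ _ _ _ _ _ _ Z) => //.
- by move=> a w [_ [_ E]].
- move=> a w i a' [ra [rw E]] Hr.
  have [u [Hu Eu]] := match_lem Hdef Hs' Hs ra rw E Hr.
  exists u; split=> //; split; first exact: reach_step ra Hr.
  split; first exact: reach_step rw Hu.
  by move=> f; rewrite Eu.
- move=> a w i w' [ra [rw E]] Hr.
  have [u [Hu Eu]] := match_lem Hdef Hs Hs' rw ra (fun f => esym (E f)) Hr.
  exists u; split=> //; split; first exact: reach_step ra Hu.
  split; first exact: reach_step rw Hr.
  by move=> f; rewrite Eu.
- by split; [apply: reach_refl|split; [apply: reach_refl|]].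
Qed.
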